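(* Let $\mathbb{K}$ be a field of characteristic $p>0$, let $S=\mathbb{K}[x_1,\ldots,x_n]$, and let $f\in S$ be a polynomial whose leading term $\mathrm{lt}_{\prec}(f)$ is a squarefree monomial for some monomial term order $\prec$. If $I\in\mathcal{C}_f$, then the initial ideal $\mathrm{lt}_{\prec}(I)$ is generated by squarefree monomials. (In particular every $I\in\mathcal{C}_f$ is radical.)
   Context: For $f\in S$, $\mathcal{C}_f$ denotes the smallest set of ideals of $S$ such that: (1) $(f)\in\mathcal{C}_f$; (2) if $I\in\mathcal{C}_f$ then $I:J\in\mathcal{C}_f$ for every ideal $J\subseteq S$; (3) if $I,J\in\mathcal{C}_f$ then $I+J\in\mathcal{C}_f$ and $I\cap J\in\mathcal{C}_f$. The initial ideal $\mathrm{lt}_{\prec}(I)$ is the ideal generated by the leading terms (w.r.t. $\prec$) of all elements of $I$. *)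

(* Defs.v *)
From mathcomp Require Import all_boot all_algebra.
From mathcomp Require Import mpoly.
Set Implicit Arguments. Unset Strict Implicit. Unset Printing Implicit Defensive.
Import GRing.Theory.
Local Open Scope ring_scope.

Section Ideals.
Variables (n : nat) (K : fieldType).
Local Notation S := {mpoly K[n]}.

Definition is_ideal (I : S -> Prop) : Prop :=
  [/\ I 0,
      (forall a b, I a -> I b -> I (a + b)) &
      (forall r a, I a -> I (r * a))].

Definition ideal_gen (A : S -> Prop) : S -> Prop :=
  fun x => exists s : seq (S * S),
    (forall c, c \in s -> A c.2) /\ x = \sum_(c <- s) c.1 * c.2.

Definition principal (f : S) : S -> Prop := ideal_gen (fun g => g = f).

Definition colon (I J : S -> Prop) : S -> Prop :=
  fun g => forall h, J h -> I (g * h).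

Definition ideal_sum (I J : S -> Prop) : S -> Prop :=
  fun g => exists a b, [/\ I a, J b & g = a + b].

Definition ideal_cap (I J : S -> Prop) : S -> Prop :=
  fun g => I g /\ J g.

(* C_f : the smallest set of ideals containing (f) and closed under colon by
   arbitrary ideals, sums and intersections (sets of ideals are taken up to
   extensional equality of subsets). *)
Inductive Cf (f : S) : (S -> Prop) -> Prop :=
  | Cf_base I : (forall g, I g <-> principal f g) -> Cf f I
  | Cf_colon I J L : Cf f I -> is_ideal J ->
      (forall g, L g <-> colon I J g) -> Cf f L
  | Cf_sum I J L : Cf f I -> Cf f J ->
      (forall g, L g <-> ideal_sum I J g) -> Cf f L
  | Cf_cap I J L : Cf f I -> Cf f J ->
      (forall g, L g <-> ideal_cap I J g) -> Cf f L.

Definition monomial_order (le : rel 'X_{1..n}) : Prop :=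
  [/\ reflexive le, antisymmetric le, transitive le & total le] /\
  (forall a b c, le a b -> le (a + c)%MM (b + c)%MM) /\
  (forall a, le 0%MM a).

Definition is_lead_mon (le : rel 'X_{1..n}) (g : S) (m : 'X_{1..n}) : Prop :=
  m \in msupp g /\ forall m', m' \in msupp g -> le m' m.

Definition squarefree_mon (m : 'X_{1..n}) : Prop := forall i : 'I_n, (m i <= 1)%N.

Definition initial_ideal (le : rel 'X_{1..n}) (I : S -> Prop) : S -> Prop :=
  ideal_gen (fun x => exists g m, [/\ I g, is_lead_mon le g m & x = 'X_[m]]).

Definition gen_by_squarefree_monomials (J : S -> Prop) : Prop :=
  exists G : 'X_{1..n} -> Prop, (forall m, G m -> squarefree_mon m) /\
    forall g, J g <-> ideal_gen (fun x => exists m, G m /\ x = 'X_[m]) g.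

End Ideals.

(* Main.v *)
Require Import Defs.
From mathcomp Require Import all_boot all_algebra.
From mathcomp Require Import mpoly.
From mathcomp Require Import zify ring.
From Stdlib Require Import Classical.
Set Implicit Arguments. Unset Strict Implicit. Unset Printing Implicit Defensive.
Import GRing.Theory.
Local Open Scope ring_scope.

Module P1.

Section Order.
Variables (n : nat) (K : fieldType) (le : rel 'X_{1..n}).
Hypothesis hle : monomial_order le.
Local Notation S := {mpoly K[n]}.

Lemma le_refl a : le a a.
Proof. by case: hle => -[r _ _ _] _; apply: r. Qed.
Lemma le_anti a b : le a b -> le b a -> a = b.
Proof. by case: hle => -[_ an _ _] _ h1 h2; apply: an; rewrite h1 h2. Qed.
Lemma le_trans a b c : le a b -> le b c -> le a c.
Proof. by case: hle => -[_ _ t _] _ h1 h2; apply: (t _ _ _ h1 h2). Qed.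
Lemma le_total a b : le a b || le b a.
Proof. by case: hle => -[_ _ _ t] _; apply: t. Qed.
Lemma le_addr a b c : le a b -> le (a + c)%MM (b + c)%MM.
Proof. by case: hle => _ [h _]; apply: h. Qed.
Lemma le_addl a b c : le a b -> le (c + a)%MM (c + b)%MM.
Proof. by move=> h; rewrite ![(c + _)%MM]addmC; apply: le_addr. Qed.
Lemma le_add a b c d : le a b -> le c d -> le (a + c)%MM (b + d)%MM.
Proof. by move=> h1 h2; apply: (le_trans (le_addr c h1)); apply: le_addl. Qed.
Lemma le_muln a b k : le a b -> le (a *+ k)%MM (b *+ k)%MM.
Proof.
move=> h; elim: k => [|k IH]; first by rewrite !mulm0n le_refl.
by rewrite !mulmS; apply: le_add.
Qed.

Lemma lead_uniq (g : S) a b : is_lead_mon le g a -> is_lead_mon le g b -> a = b.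
Proof. by move=> [ha1 ha2] [hb1 hb2]; apply: le_anti; [apply: hb2|apply: ha2]. Qed.

Lemma lead_neq0 (g : S) a : is_lead_mon le g a -> g@_a != 0.
Proof. by case=> h _; rewrite -mcoeff_msupp. Qed.

Lemma coef_mulE (g h : S) k : (g * h)@_k =
  \sum_(m1 <- msupp g) \sum_(m2 <- msupp h) g@_m1 * h@_m2 * ((m1 + m2)%MM == k)%:R.
Proof.
rewrite mpolyME big_allpairs (raddf_sum (mcoeff k)); apply: eq_bigr => m1 _.
rewrite (raddf_sum (mcoeff k)); apply: eq_bigr => m2 _.
by rewrite /= mcoeffZ mcoeffX.
Qed.

Lemma coef_mul_top (g h : S) a b : is_lead_mon le g a -> is_lead_mon le h b ->
  (g * h)@_(a + b) = g@_a * h@_b.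
Proof.
move=> [ga gl] [hb hl].
rewrite coef_mulE (bigD1_seq a) ?msupp_uniq //=.
rewrite (bigD1_seq b) ?msupp_uniq //= eqxx mulr1.
rewrite big1 ?addr0; last first.
  move=> m2 hm2.
  case: eqP => [/addmI e|]; last by rewrite mulr0.
  by rewrite e eqxx in hm2.
rewrite big_seq_cond big1 /= ?addr0 // => m1 /andP[m1in hm1].
rewrite big_seq big1 // => m2 m2in.
case: eqP => [e|]; last by rewrite mulr0.
exfalso; move/negP: hm1; apply; apply/eqP.
have l1 : le (m1 + m2)%MM (a + m2)%MM by apply: le_addr; apply: gl m1in.
have l2 : le (a + m2)%MM (a + b)%MM by apply: le_addl; apply: hl.
have : (m1 + m2)%MM = (a + m2)%MM.
  by apply: le_anti => //; rewrite e; apply: l2.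
by move/addIm.
Qed.

Lemma lead_mul (g h : S) a b : is_lead_mon le g a -> is_lead_mon le h b ->
  is_lead_mon le (g * h) (a + b)%MM.
Proof.
move=> ha hb; split.
  by rewrite mcoeff_msupp (coef_mul_top ha hb) mulf_neq0 // lead_neq0.
move=> m /msuppM_le /allpairsP [[m1 m2] /= [h1 h2 ->]].
by apply: le_add; [apply: ha.2 | apply: hb.2].
Qed.

Lemma lead_X a : is_lead_mon le ('X_[a] : S) a.
Proof.
by split; [rewrite msuppX mem_seq1 | move=> m; rewrite msuppX mem_seq1 => /eqP ->; apply: le_refl].
Qed.

Lemma lead_exp (g : S) a k : is_lead_mon le g a -> is_lead_mon le (g ^+ k) (a *+ k)%MM.
Proof.
move=> ha; elim: k => [|k IH].
  by rewrite expr0 mulm0n -mpolyX0; apply: lead_X.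
by rewrite exprS mulmS; apply: lead_mul.
Qed.

End Order.

End P1.

Module P2.
Import P1.

Section Frob.
Variables (n : nat) (K : fieldType) (p : nat).
Hypothesis hp : p \in [pchar K].
Local Notation S := {mpoly K[n]}.

Lemma p_prime : prime p. Proof. by case/andP: hp. Qed.
Lemma p_gt0 : (0 < p)%N. Proof. exact: prime_gt0 p_prime. Qed.
Lemma p_gt1 : (1 < p)%N. Proof. exact: prime_gt1 p_prime. Qed.

Definition onem : 'X_{1..n} := [multinom 1%N | i < n].
Definition Ed (d : 'X_{1..n}) : 'X_{1..n} := (d *+ p + onem *+ p.-1)%MM.
Definition frobok (e : 'X_{1..n}) : bool := [forall i, (e i %% p == p.-1)%N].
Definition ediv (e : 'X_{1..n}) : 'X_{1..n} := [multinom (e i %/ p)%N | i < n].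
Definition Tm (e : 'X_{1..n}) : S := if frobok e then 'X_[ediv e] else 0.
Definition phi (h : S) : S := \sum_(e <- msupp h) h@_e *: Tm e.

Lemma EdE d i : Ed d i = (d i * p + p.-1)%N.
Proof. by rewrite /Ed mnmDE !mulmnE mnmE mul1n. Qed.

Lemma Ed_eq d e : (Ed d == e) = frobok e && (ediv e == d).
Proof.
have p0 := p_gt0.
apply/idP/idP.
  move/eqP => <-; apply/andP; split.
    apply/forallP => i; rewrite EdE modnMDl modn_small //; lia.
  apply/eqP/mnmP => i; rewrite mnmE EdE divnMDl // divn_small ?addn0 //; lia.
case/andP => /forallP ok /eqP <-; apply/eqP/mnmP => i.
rewrite EdE mnmE -(eqP (ok i)); exact/esym/divn_eq.
Qed.

Lemma Tm_coef e d : (Tm e)@_d = (Ed d == e)%:R.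
Proof.
rewrite /Tm Ed_eq; case: (frobok e) => /=; last by rewrite mcoeff0.
by rewrite mcoeffX.
Qed.

Lemma coef_pick (h : S) x :
  \sum_(e <- msupp h) h@_e * (x == e)%:R = h@_x.
Proof.
case: (boolP (x \in msupp h)) => hx.
  rewrite (bigD1_seq x) ?msupp_uniq //= eqxx mulr1 big1 ?addr0 //.
  by move=> e /negbTE; rewrite eq_sym => ->; rewrite mulr0.
rewrite memN_msupp_eq0 // big_seq big1 // => e he.
by case: eqP => [ex|]; [rewrite ex he in hx | rewrite mulr0].
Qed.

Lemma phi_coef h d : (phi h)@_d = h@_(Ed d).
Proof.
rewrite /phi (raddf_sum (mcoeff d)) -coef_pick; apply: eq_bigr => e _.
by rewrite /= mcoeffZ Tm_coef.
Qed.

Lemma phiD g h : phi (g + h) = phi g + phi h.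
Proof. by apply/mpolyP => d; rewrite mcoeffD !phi_coef mcoeffD. Qed.
Lemma phiZ c h : phi (c *: h) = c *: phi h.
Proof. by apply/mpolyP => d; rewrite mcoeffZ !phi_coef mcoeffZ. Qed.
Lemma phi0 : phi 0 = 0.
Proof. by apply/mpolyP => d; rewrite phi_coef !mcoeff0. Qed.
Lemma phi_sum (I : Type) (r : seq I) (F : I -> S) :
  phi (\sum_(i <- r) F i) = \sum_(i <- r) phi (F i).
Proof. by apply: (big_morph phi phiD phi0). Qed.

Lemma mcoeffXM m (q : S) k :
  ('X_[m] * q)@_k = if (m <= k)%MM then q@_(k - m) else 0.
Proof.
case: ifP => hmk.
  by rewrite -commr_mpolyX -{1}(submK hmk) addmC mcoeffMX.
rewrite -commr_mpolyX memN_msupp_eq0 // (perm_mem (msuppMX _ _)).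
apply/mapP => -[m' _ e]; move/negP: hmk; apply; rewrite e; exact: lem_addr.
Qed.

Lemma phiXp b g : phi ('X_[b *+ p] * g) = 'X_[b] * phi g.
Proof.
have p0 := p_gt0.
apply/mpolyP => d; rewrite phi_coef !mcoeffXM phi_coef.
have -> : ((b *+ p)%MM <= Ed d)%MM = (b <= d)%MM.
  apply/mnm_lepP/mnm_lepP => h i; have := h i; rewrite mulmnE EdE => hi.
    have : (b i * p < (d i).+1 * p)%N.
      by rewrite mulSn; apply: (leq_ltn_trans hi); rewrite addnC ltn_add2r prednK // leqnn.
    by rewrite ltn_pmul2r.
  by apply: leq_trans (leq_addr _ _); rewrite leq_pmul2r.
case: ifP => // hbd; congr (g@_ _); apply/mnmP => i.
move/mnm_lepP: hbd => /(_ i) hi.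
rewrite mnmBE !EdE mnmBE mulmnE mulnBl.
have : (b i * p <= d i * p)%N by rewrite leq_mul2r hi orbT.
move: (b i * p)%N (d i * p)%N => x y; lia.
Qed.


Lemma hpS : p \in [pchar S].
Proof.
by rewrite inE p_prime /= -mpolyC_nat (pcharf0 hp).
Qed.

Definition sigma (a : S) : S := map_mpoly (pFrobenius_aut hp) a.

Lemma sigma_coef a m : (sigma a)@_m = (a@_m) ^+ p.
Proof. by rewrite mcoeff_map_mpoly. Qed.

Lemma sigmaE a : sigma a = \sum_(b <- msupp a) (a@_b ^+ p) *: 'X_[b].
Proof.
rewrite {1}(mpolyE a) /sigma raddf_sum; apply: eq_bigr => b _.
by rewrite /= map_mpolyZ map_mpolyX.
Qed.

Lemma expp_sum (a : S) : a ^+ p = \sum_(b <- msupp a) (a@_b ^+ p) *: 'X_[b *+ p].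
Proof.
rewrite {1}(mpolyE a) -(pFrobenius_autE hpS) rmorph_sum; apply: eq_bigr => b _.
by rewrite /= pFrobenius_autE exprZn mpolyXn.
Qed.

Lemma phi_frob (a g : S) : phi (a ^+ p * g) = sigma a * phi g.
Proof.
rewrite expp_sum sigmaE !mulr_suml phi_sum; apply: eq_bigr => b _.
by rewrite -!scalerAl phiZ phiXp.
Qed.

End Frob.

End P2.

Module P3.
Import P1.
Import P2.

Section Lin.
Variables (n : nat) (K : fieldType) (p : nat).
Hypothesis hp : p \in [pchar K].
Local Notation S := {mpoly K[n]}.
Local Notation sigma := (@sigma n K p hp).

Definition comb (e : seq K) (a : nat -> K) := \sum_(0 <= i < size e) e`_i * a i ^+ p.
Definition indep (e : seq K) := forall a, comb e a = 0 -> forall i, (i < size e)%N -> a i = 0.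
Definition inspan (e : seq K) x := exists a, x = comb e a.

Lemma fK x : pFrobenius_aut hp x = x ^+ p. Proof. by []. Qed.

Lemma zero_p : (0 : K) ^+ p = 0.
Proof. by rewrite expr0n eqn0Ngt (p_gt0 hp). Qed.

Lemma inspan_cat e e' x : inspan e x -> inspan (e ++ e') x.
Proof.
case=> a ->; exists (fun i => if (i < size e)%N then a i else 0).
rewrite /comb size_cat [RHS](@big_cat_nat _ _ _ (size e)) ?leq_addr //=.
rewrite [X in _ = _ + X]big_nat [X in _ = _ + X]big1 ?addr0; last first.
  by move=> i /andP[hi _]; rewrite ltnNge hi /= zero_p mulr0.
rewrite big_nat [RHS]big_nat; apply: eq_bigr => i /andP[_ hi].
by rewrite nth_cat hi.
Qed.

Lemma comb_rcons e k a : comb (rcons e k) a = comb e a + k * a (size e) ^+ p.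
Proof.
rewrite /comb size_rcons big_nat_recr //= nth_rcons ltnn eqxx; congr (_ + _).
by rewrite !big_nat; apply: eq_bigr => i /andP[_ hi]; rewrite nth_rcons hi.
Qed.

Lemma inspan_rcons e k : inspan (rcons e k) k.
Proof.
exists (fun i => if i == size e then 1 else 0); rewrite comb_rcons eqxx expr1n mulr1.
rewrite /comb big_nat big1 ?add0r // => i /andP[_ hi].
by rewrite (ltn_eqF hi) zero_p mulr0.
Qed.

Lemma indep_rcons e k : indep e -> ~ inspan e k -> indep (rcons e k).
Proof.
move=> ie nsp a; rewrite comb_rcons => h.
have hs : a (size e) = 0.
  apply/eqP; apply/negP => /negP nz; apply: nsp.
  exists (fun i => - a i / a (size e)).
  have nzp : a (size e) ^+ p != 0 by rewrite expf_neq0.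
  apply: (mulIf nzp); rewrite /comb big_distrl /=.
  have -> : k * a (size e) ^+ p = - comb e a by apply/eqP; rewrite -addr_eq0 addrC h.
  rewrite /comb -sumrN; apply: eq_bigr => i _.
  rewrite -!fK rmorphM /= fmorphV rmorphN /= !fK -mulrA mulrAC -mulrA.
  by rewrite mulfV // mulr1 mulrN.
move: h; rewrite hs zero_p mulr0 addr0 => h i; rewrite size_rcons ltnS leq_eqVlt.
by case/orP => [/eqP -> // | hi]; apply: ie.
Qed.

Lemma ext e (ks : seq K) : indep e ->
  exists e', indep (e ++ e') /\ forall k, k \in ks -> inspan (e ++ e') k.
Proof.
elim: ks e => [|k ks IH] e ie.
  by exists [::]; rewrite cats0; split.
case: (classic (inspan e k)) => hk.
  have [e' [ie' hs]] := IH e ie; exists e'; split => // x; rewrite inE.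
  by case/orP => [/eqP -> | /hs //]; apply: inspan_cat.
have ie1 := indep_rcons ie hk.
have [e' [ie' hs]] := IH _ ie1; exists (k :: e'); rewrite -cat_rcons; split => // x.
rewrite inE; case/orP => [/eqP -> | /hs //]; apply: inspan_cat; exact: inspan_rcons.
Qed.

Definition dsum (e : seq K) (w : nat -> S) : S :=
  \sum_(0 <= i < size e) e`_i *: sigma (w i).

Lemma dsum_coef e w d : (dsum e w)@_d = comb e (fun i => (w i)@_d).
Proof.
rewrite /dsum (raddf_sum (mcoeff d)); apply: eq_bigr => i _.
by rewrite /= mcoeffZ sigma_coef.
Qed.

Lemma indep_unique e w w' : indep e -> dsum e w = dsum e w' ->
  forall i, (i < size e)%N -> w i = w' i.
Proof.
move=> ie h i hi; apply/mpolyP => d; apply/eqP; rewrite -subr_eq0; apply/eqP.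
move: i hi; apply: ie.
have -> : comb e (fun i => (w i)@_d - (w' i)@_d) = (dsum e w)@_d - (dsum e w')@_d.
  rewrite !dsum_coef /comb -sumrB; apply: eq_bigr => i _.
  by rewrite -!fK rmorphB /= mulrBr.
by rewrite h subrr.
Qed.

End Lin.

End P3.

Module P4.
Import P1.
Import P2.
Import P3.

Section IG.
Variables (n : nat) (K : fieldType).
Local Notation S := {mpoly K[n]}.

Lemma ig_0 (A : S -> Prop) : ideal_gen A 0.
Proof. by exists [::]; rewrite big_nil. Qed.

Lemma ig_add (A : S -> Prop) x y : ideal_gen A x -> ideal_gen A y -> ideal_gen A (x + y).
Proof.
move=> [s1 [h1 ->]] [s2 [h2 ->]]; exists (s1 ++ s2); rewrite big_cat; split => // c.
by rewrite mem_cat => /orP[/h1|/h2].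
Qed.

Lemma ig_mul (A : S -> Prop) r x : ideal_gen A x -> ideal_gen A (r * x).
Proof.
move=> [s [h ->]]; exists [seq (r * c.1, c.2) | c <- s]; split.
  by move=> c /mapP [c' /h hc' ->].
by rewrite big_map mulr_sumr; apply: eq_bigr => c _; rewrite mulrA.
Qed.

Lemma ig_is_ideal (A : S -> Prop) : is_ideal (ideal_gen A).
Proof. split; [exact: ig_0 | exact: ig_add | exact: ig_mul]. Qed.

Lemma ig_base (A : S -> Prop) x : A x -> ideal_gen A x.
Proof. by move=> hx; exists [:: (1, x)]; rewrite big_seq1 mul1r; split => // c; rewrite inE => /eqP ->. Qed.

Lemma ig_sub (A B : S -> Prop) x : (forall y, A y -> ideal_gen B y) ->
  ideal_gen A x -> ideal_gen B x.
Proof.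
move=> hAB [s [h ->]]; elim: s h => [|c s IH] h; first by rewrite big_nil; apply: ig_0.
rewrite big_cons; apply: ig_add; first by apply: ig_mul; apply: hAB; apply: h; rewrite mem_head.
by apply: IH => c' hc'; apply: h; rewrite inE hc' orbT.
Qed.

Lemma ideal_sum_mul (I : S -> Prop) (s : seq S) (F : S -> S) : is_ideal I ->
  (forall x, x \in s -> I (F x)) -> I (\sum_(x <- s) F x).
Proof.
case=> I0 ID IM; elim: s => [|x s IH] h; first by rewrite big_nil.
rewrite big_cons; apply: ID; first by apply: h; rewrite mem_head.
by apply: IH => y hy; apply: h; rewrite inE hy orbT.
Qed.

End IG.

Section Sig.
Variables (n : nat) (K : fieldType) (p : nat).
Hypothesis hp : p \in [pchar K].
Local Notation S := {mpoly K[n]}.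
Local Notation sigma := (@sigma n K p hp).
Local Notation dsum := (@dsum n K p hp).
Local Notation indep := (@indep K p).
Local Notation inspan := (@inspan K p).
Local Notation comb := (@comb K p).

Definition Isig (I : S -> Prop) : S -> Prop :=
  ideal_gen (fun x => exists h, I h /\ x = sigma h).

Lemma sigmaM a b : sigma (a * b) = sigma a * sigma b.
Proof. by rewrite /P2.sigma rmorphM. Qed.
Lemma sigmaX m : sigma 'X_[m] = 'X_[m].
Proof. by rewrite /P2.sigma map_mpolyX. Qed.
Lemma sigmaD a b : sigma (a + b) = sigma a + sigma b.
Proof. by rewrite /P2.sigma rmorphD. Qed.
Lemma sigma0 : sigma 0 = 0.
Proof. by rewrite /P2.sigma rmorph0. Qed.
Lemma sigma1 : sigma 1 = 1.
Proof. by rewrite /P2.sigma rmorph1. Qed.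
Lemma sigmaZ c a : sigma (c *: a) = c ^+ p *: sigma a.
Proof. by rewrite /P2.sigma /= map_mpolyZ. Qed.

Lemma lin1 (I : S -> Prop) z : is_ideal I -> Isig I z ->
  exists s : seq (K * S), (forall t, t \in s -> I t.2) /\
    z = \sum_(t <- s) t.1 *: sigma t.2.
Proof.
move=> [I0 ID IM] [s0 [hs0 ->]].
elim: s0 hs0 => [|c s0 IH] hs0; first by exists [::]; rewrite !big_nil.
have [h [Ih e]] := hs0 c (mem_head _ _).
have [s' [hs' E]] : exists s' : seq (K * S), (forall t, t \in s' -> I t.2) /\
    \sum_(c <- s0) c.1 * c.2 = \sum_(t <- s') t.1 *: sigma t.2.
  by apply: IH => c' hc'; apply: hs0; rewrite inE hc' orbT.
exists ([seq (c.1@_b, 'X_[b] * h) | b <- msupp c.1] ++ s'); split.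
  move=> t; rewrite mem_cat => /orP[/mapP [b _ ->] /= | /hs'] //.
  exact: IM.
rewrite big_cat big_cons /= E big_map; congr (_ + _).
rewrite e {1}(mpolyE c.1) mulr_suml; apply: eq_bigr => b _.
by rewrite sigmaM sigmaX scalerAl.
Qed.

Lemma combine (I : S -> Prop) (E : seq K) (s : seq (K * S)) : is_ideal I ->
  (forall t, t \in s -> I t.2) -> (forall t, t \in s -> inspan E t.1) ->
  exists W, (forall i, I (W i)) /\ \sum_(t <- s) t.1 *: sigma t.2 = dsum E W.
Proof.
move=> [I0 ID IM]; elim: s => [|t s IH] h1 h2.
  exists (fun _ => 0); split => //; rewrite big_nil /P3.dsum big1 // => i _.
  by rewrite sigma0 scaler0.
have [W [hW EW]] : exists W, (forall i, I (W i)) /\ \sum_(t <- s) t.1 *: sigma t.2 = dsum E W.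
  by apply: IH => t' ht'; [apply: h1 | apply: h2]; rewrite inE ht' orbT.
have [a ea] := h2 t (mem_head _ _).
exists (fun i => a i *: t.2 + W i); split.
  move=> i; apply: ID => //; rewrite -mul_mpolyC; apply: IM; apply: h1; exact: mem_head.
rewrite big_cons EW ea /P3.comb /P3.dsum scaler_suml -big_split /=; apply: eq_bigr => i _.
by rewrite sigmaD sigmaZ scalerDr scalerA.
Qed.

Lemma dec_exists (I : S -> Prop) z e : is_ideal I -> Isig I z -> indep e ->
  exists e', indep (e ++ e') /\ exists W, (forall i, I (W i)) /\ z = dsum (e ++ e') W.
Proof.
move=> iI hz ie; have [s [hs ->]] := lin1 iI hz.
have [e' [ie' hsp]] := ext hp (map fst s) ie.
exists e'; split => //; apply: combine => // t ht; apply: hsp; exact: map_f.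
Qed.

Lemma dsum_pad e e' W :
  dsum (e ++ e') (fun i => if (i < size e)%N then W i else 0) = dsum e W.
Proof.
rewrite /P3.dsum size_cat (@big_cat_nat _ _ _ (size e)) ?leq_addr //=.
rewrite [X in _ + X = _]big_nat [X in _ + X = _]big1 ?addr0; last first.
  by move=> i /andP[hi _]; rewrite ltnNge hi /= sigma0 scaler0.
rewrite big_nat [RHS]big_nat; apply: eq_bigr => i /andP[_ hi].
by rewrite nth_cat hi.
Qed.

Lemma dsum_Isig (L : S -> Prop) e W : (forall i, (i < size e)%N -> L (W i)) ->
  Isig L (dsum e W).
Proof.
move=> h; exists [seq ((e`_i)%:MP, sigma (W i)) | i <- index_iota 0 (size e)]; split.
  move=> c /mapP [i hi ->] /=; exists (W i); split => //; apply: h.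
  by move: hi; rewrite mem_index_iota.
by rewrite big_map /P3.dsum; apply: eq_bigr => i _; rewrite mul_mpolyC.
Qed.

Lemma indep_nil : indep [::].
Proof. by move=> a _ i. Qed.

Lemma Isig_lead (le : rel 'X_{1..n}) (I : S -> Prop) z c : is_ideal I -> Isig I z ->
  is_lead_mon le z c -> exists h, I h /\ is_lead_mon le h c.
Proof.
move=> iI hz [zc zl].
have [E [iE [W [hW ez]]]] := dec_exists iI hz indep_nil.
rewrite cat0s in iE ez.
have supp_sub : forall i m, (i < size E)%N -> m \in msupp (W i) -> m \in msupp z.
  move=> i m hi; rewrite !mcoeff_msupp; apply: contra => /eqP hm.
  apply/eqP; move: i hi; apply: iE; rewrite -hm ez dsum_coef //.
case: (classic (exists i, (i < size E)%N /\ (W i)@_c != 0)) => [[i [hi hc]]|hn].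
  exists (W i); split => //; split; first by rewrite mcoeff_msupp.
  by move=> m hm; apply: zl; apply: (supp_sub i).
exfalso; move: zc; rewrite mcoeff_msupp ez dsum_coef /P3.comb big_nat big1 ?eqxx //.
move=> i /andP[_ hi]; case: (eqVneq (W i)@_c 0) => [->|nz]; first by rewrite zero_p // mulr0.
by exfalso; apply: hn; exists i.
Qed.

Lemma Isig_cap (I J : S -> Prop) z : is_ideal I -> is_ideal J -> Isig I z -> Isig J z ->
  Isig (ideal_cap I J) z.
Proof.
move=> iI iJ hI hJ.
have [e1 [ie1 [W1 [hW1 e1z]]]] := dec_exists iI hI indep_nil.
rewrite cat0s in ie1 e1z.
have [e2 [ie2 [W2 [hW2 e2z]]]] := dec_exists iJ hJ ie1.
have U := indep_unique ie2 (etrans (esym e2z) (etrans e1z (esym (dsum_pad e1 e2 W1)))).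
rewrite e2z; apply: dsum_Isig => i hi; split => //.
rewrite (U i hi); case: ifP => _; [exact: hW1 | by case: iI].
Qed.

Lemma dsum_mulr e W j : dsum e W * sigma j = dsum e (fun i => W i * j).
Proof.
by rewrite /P3.dsum mulr_suml; apply: eq_bigr => i _; rewrite -scalerAl sigmaM.
Qed.

Lemma Isig_colon (I J : S -> Prop) z : is_ideal I ->
  (forall j, J j -> Isig I (z * sigma j)) -> Isig (colon I J) z.
Proof.
move=> iI hz.
have iT : is_ideal (fun _ : S => True) by [].
have hT : Isig (fun _ => True) z.
  by rewrite -[z]mulr1 -sigma1; apply: ig_mul; apply: ig_base; exists 1.
have [E [iE [Y [_ ez]]]] := dec_exists iT hT indep_nil.
rewrite cat0s in iE ez.
rewrite ez; apply: dsum_Isig => i hi j hj.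
have hzj := hz j hj; rewrite ez dsum_mulr in hzj.
have [e' [ie' [W [hW eW]]]] := dec_exists iI hzj iE.
have U := indep_unique ie' (etrans (esym eW) (esym (dsum_pad E e' (fun i => Y i * j)))).
have := U i; rewrite size_cat hi => /(_ (ltn_addr _ hi)) <-; exact: hW.
Qed.

End Sig.

End P4.

Module P5.
Import P1.
Import P2.
Import P3.
Import P4.

Section Main.
Variables (K : fieldType) (p : nat).
Hypothesis hp : p \in [pchar K].
Variables (n : nat) (le : rel 'X_{1..n}).
Hypothesis hle : monomial_order le.
Variables (f : {mpoly K[n]}) (m : 'X_{1..n}).
Hypothesis hm : is_lead_mon le f m.
Hypothesis hsq : squarefree_mon m.
Local Notation S := {mpoly K[n]}.
Local Notation sigma := (@sigma n K p hp).
Local Notation phi := (@phi n K p).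
Local Notation Isig := (@Isig n K p hp).
Local Notation Ed := (@Ed n p).

Definition u : S := f ^+ p.-1 * 'X_[(onem n - m) *+ p.-1].

Lemma lead_u : is_lead_mon le u (onem n *+ p.-1)%MM.
Proof.
have -> : (onem n *+ p.-1 = m *+ p.-1 + (onem n - m) *+ p.-1)%MM.
  apply/mnmP => i; rewrite mnmDE !mulmnE mnmBE /onem mnmE.
  have := hsq i; move: (m i) => x; nia.
apply: lead_mul => //; [exact: lead_exp | exact: lead_X].
Qed.

Lemma iff_ideal (I L : S -> Prop) : (forall g, I g <-> L g) -> is_ideal L -> is_ideal I.
Proof.
move=> h [L0 LD LM]; split; first by apply/h.
  by move=> a b /h ha /h hb; apply/h; apply: LD.
by move=> r a /h ha; apply/h; apply: LM.
Qed.

Lemma Isig_mono (A B : S -> Prop) z : (forall g, A g -> B g) -> Isig A z -> Isig B z.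
Proof.
move=> h; apply: ig_sub => y [g [Ag ->]]; apply: ig_base; exists g; split => //; exact: h.
Qed.

Lemma colon_ideal (I J : S -> Prop) : is_ideal I -> is_ideal (colon I J).
Proof.
case=> I0 ID IM; split.
- by move=> h _; rewrite mul0r.
- by move=> a b ha hb h hh; rewrite mulrDl; apply: ID; [apply: ha | apply: hb].
- by move=> r a ha h hh; rewrite -mulrA; apply: IM; apply: ha.
Qed.

Lemma sum_ideal (I J : S -> Prop) : is_ideal I -> is_ideal J -> is_ideal (ideal_sum I J).
Proof.
case=> I0 ID IM [J0 JD JM]; split.
- by exists 0, 0; rewrite addr0.
- move=> a b [a1 [a2 [h1 h2 ->]]] [b1 [b2 [h3 h4 ->]]]; exists (a1 + b1), (a2 + b2).
  by split; [apply: ID | apply: JD | rewrite addrACA].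
- move=> r a [a1 [a2 [h1 h2 ->]]]; exists (r * a1), (r * a2).
  by split; [apply: IM | apply: JM | rewrite mulrDr].
Qed.

Lemma cap_ideal (I J : S -> Prop) : is_ideal I -> is_ideal J -> is_ideal (ideal_cap I J).
Proof.
case=> I0 ID IM [J0 JD JM]; split.
- by [].
- by move=> a b [h1 h2] [h3 h4]; split; [apply: ID | apply: JD].
- by move=> r a [h1 h2]; split; [apply: IM | apply: JM].
Qed.

Lemma principal_mul g : principal f g -> exists q, g = q * f.
Proof.
case=> s [hs ->]; exists (\sum_(c <- s) c.1); rewrite mulr_suml big_seq [RHS]big_seq.
by apply: eq_bigr => c hc; rewrite (hs c hc).
Qed.

Definition Qinv (I : S -> Prop) := is_ideal I /\ forall g, I g -> Isig I (phi (u * g)).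

Lemma pS : p = p.-1.+1. Proof. by rewrite prednK // (p_gt0 hp). Qed.

Lemma Cf_Q I : Cf f I -> Qinv I.
Proof.
elim => {I}.
- move=> I hI; have iI : is_ideal I by apply: (iff_ideal hI); apply: ig_is_ideal.
  split => // g /hI /principal_mul [q ->].
  have -> : u * (q * f) = f ^+ p * ('X_[(onem n - m) *+ p.-1] * q).
    have -> : f ^+ p = f ^+ p.-1 * f by rewrite {1}pS exprSr.
    rewrite /u; move: (f ^+ p.-1) ('X_[_]) => y x; ring.
  rewrite phi_frob mulrC; apply: ig_mul; apply: ig_base; exists f; split => //.
  by apply/hI; apply: ig_base.
- move=> I J L _ [iI hI] iJ hL; have iL : is_ideal L.
    by apply: (iff_ideal hL); apply: colon_ideal.
  split => // g /hL hg; apply: (Isig_mono (A := colon I J)); first by move=> x /hL.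
  apply: Isig_colon => // j hj.
  have hjp : J (j ^+ p).
    have -> : j ^+ p = j ^+ p.-1 * j by rewrite {1}pS exprSr.
    by case: iJ => _ _ JM; apply: JM.
  have := hI _ (hg _ hjp).
  have -> : u * (g * j ^+ p) = j ^+ p * (u * g).
    by move: (j ^+ p) u => y x; ring.
  by rewrite phi_frob mulrC.
- move=> I J L _ [iI hI] _ [iJ hJ] hL; have iL : is_ideal L.
    by apply: (iff_ideal hL); apply: sum_ideal.
  split => // g /hL [a [b [ha hb ->]]].
  rewrite mulrDr (phiD hp); apply: ig_add.
    apply: (Isig_mono (A := I)); last exact: hI.
    by move=> x hx; apply/hL; exists x, 0; rewrite addr0; split => //; case: iJ.
  apply: (Isig_mono (A := J)); last exact: hJ.
  by move=> x hx; apply/hL; exists 0, x; rewrite add0r; split => //; case: iI.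
- move=> I J L _ [iI hI] _ [iJ hJ] hL; have iL : is_ideal L.
    by apply: (iff_ideal hL); apply: cap_ideal.
  split => // g /hL [ha hb].
  apply: (Isig_mono (A := ideal_cap I J)); first by move=> x /hL.
  by apply: Isig_cap => //; [apply: hI | apply: hJ].
Qed.

End Main.

End P5.

Module P6.
Import P1.
Import P2.
Import P3.
Import P4.
Import P5.

Section Desc.
Variables (K : fieldType) (p : nat).
Hypothesis hp : p \in [pchar K].
Variables (n : nat) (le : rel 'X_{1..n}).
Hypothesis hle : monomial_order le.
Variables (f : {mpoly K[n]}) (m : 'X_{1..n}).
Hypothesis hm : is_lead_mon le f m.
Hypothesis hsq : squarefree_mon m.
Local Notation S := {mpoly K[n]}.
Local Notation phi := (@phi n K p).
Local Notation Ed := (@Ed n p).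

Definition cdiv (b : 'X_{1..n}) : 'X_{1..n} := [multinom ((b i + p.-1) %/ p)%N | i < n].
Definition rad (b : 'X_{1..n}) : 'X_{1..n} := [multinom minn (b i) 1 | i < n].

Lemma cdiv_fact x : let q := ((x + p.-1) %/ p)%N in
  [/\ (x <= q * p)%N, (q <= x)%N, (2 <= x -> q < x)%N & minn q 1 = minn x 1].
Proof.
move=> q; have p1 := p_gt1 hp.
have E := divn_eq (x + p.-1) p; have R := ltn_pmod (x + p.-1) (p_gt0 hp).
rewrite -/q in E; move: E R; move: ((x + p.-1) %% p)%N => r E R.
split; [nia | nia | move=> *; nia | nia].
Qed.

Lemma Ed_inj c d : Ed c = Ed d -> c = d.
Proof.
move=> e; apply/mnmP => i; have := congr1 (fun x : 'X_{1..n} => x i) e.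
rewrite /= !EdE => /eqP; rewrite eqn_add2r eqn_pmul2r ?(p_gt0 hp) //; exact/eqP.
Qed.

Lemma phi_lead (h : S) c : is_lead_mon le h (Ed c) -> is_lead_mon le (phi h) c.
Proof.
move=> [hc hl]; split; first by rewrite mcoeff_msupp (phi_coef hp) -mcoeff_msupp.
move=> d; rewrite mcoeff_msupp (phi_coef hp) -mcoeff_msupp => /hl hd.
case/orP: (le_total hle d c) => // hcd.
have : le (Ed c) (Ed d) by apply: (le_addr hle); apply: (le_muln hle).
move/(le_anti hle hd)/Ed_inj => ->; exact: le_refl.
Qed.

Lemma descent1 (I : S -> Prop) g b : Qinv hp f m I -> I g -> is_lead_mon le g b ->
  exists h, I h /\ is_lead_mon le h (cdiv b).
Proof.
move=> [iI hI] Ig hb.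
have bc : (b <= cdiv b *+ p)%MM.
  by apply/mnm_lepP => i; rewrite mulmnE mnmE; case: (cdiv_fact (b i)).
have Ig' : I ('X_[cdiv b *+ p - b] * g) by case: iI => _ _ IM; apply: IM.
apply: (Isig_lead iI (hI _ Ig')); apply: phi_lead.
have -> : Ed (cdiv b) = (onem n *+ p.-1 + ((cdiv b *+ p - b) + b))%MM.
  by rewrite submK // addmC.
apply: (lead_mul hle); first exact: (lead_u hp hle hm hsq).
by apply: (lead_mul hle) => //; apply: lead_X.
Qed.

Lemma descend (I : S -> Prop) : Qinv hp f m I -> forall k b g, (mdeg b < k)%N ->
  I g -> is_lead_mon le g b -> exists h, I h /\ is_lead_mon le h (rad b).
Proof.
move=> QI; elim => [|k IH] b g // hk Ig hb.
case: (boolP [forall i, (b i <= 1)%N]) => [/forallP sq | nsq].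
  have -> : rad b = b by apply/mnmP => i; rewrite mnmE; have := sq i; case: (b i) => [|[]].
  by exists g.
have [h [Ih hh]] := descent1 QI Ig hb.
have cb : (cdiv b <= b)%MM by apply/mnm_lepP => i; rewrite mnmE; case: (cdiv_fact (b i)).
have -> : rad b = rad (cdiv b).
  by apply/mnmP => i; rewrite !mnmE; case: (cdiv_fact (b i)).
apply: (IH _ h) => //.
have : (mdeg b = mdeg (cdiv b) + mdeg (b - cdiv b))%N by rewrite -mdegD addmC submK.
have : mdeg (b - cdiv b) != 0%N.
  rewrite mdeg_eq0; apply/negP => /eqP e.
  move/negP: nsq; apply; apply/forallP => i; apply/negPn/negP; rewrite -ltnNge => hi.
  have := congr1 (fun x : 'X_{1..n} => x i) e; rewrite /= mnmBE mnm0E mnmE.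
  by case: (cdiv_fact (b i)) => _ _ /(_ hi) lt _; move/eqP; rewrite subn_eq0 leqNgt lt.
move: (mdeg b) (mdeg (cdiv b)) (mdeg (b - cdiv b)) hk => x y z; lia.
Qed.

End Desc.



End P6.
Import P1.
Import P2.
Import P3.
Import P4.
Import P5.
Import P6.
Theorem proposition2p1 (K : fieldType) (p : nat) (hp : p \in [pchar K])
  (n : nat) (le : rel 'X_{1..n}) (hle : monomial_order le)
  (f : {mpoly K[n]}) (m : 'X_{1..n})
  (hm : is_lead_mon le f m) (hsq : squarefree_mon m)
  (I : {mpoly K[n]} -> Prop) (hI : Cf f I) :
  gen_by_squarefree_monomials (initial_ideal le I).
Proof.
have QI := Cf_Q hp m hI.
exists (fun m0 => squarefree_mon m0 /\ exists g, I g /\ is_lead_mon le g m0); split.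
  by move=> m0 [].
move=> g; split.
  apply: ig_sub => y [g0 [b [Ig0 hb ->]]].
  have [h [Ih hh]] := descend hle hm hsq QI (ltnSn (mdeg b)) Ig0 hb.
  have rb : (rad b <= b)%MM by apply/mnm_lepP => i; rewrite mnmE geq_minl.
  rewrite -(submK rb) mpolyXD; apply: ig_mul; apply: ig_base; exists (rad b); split => //.
  split; last by exists h.
  by move=> i; rewrite mnmE geq_minr.
apply: ig_sub => y [m0 [[_ [g0 [Ig0 hg0]]] ->]]; apply: ig_base; by exists g0, m0.
Qed.
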